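(* Let $\mathbf{f}\colon\mathbb{R}^n\to\mathbb{R}^n$ be a polynomial vector field, $B\in\mathbb{R}[\mathbf{x}]$, and $N=N_{B,\mathbf{f}}$. The following are equivalent: (a) for all $\mathbf{x}\in\mathbb{R}^n$ and all $1\le i\le N$: if $\mathcal{L}^j_{\mathbf{f}}B(\mathbf{x})=0$ for all $0\le j\le i-1$, then $\mathcal{L}^i_{\mathbf{f}}B(\mathbf{x})\le 0$; (b) for all $\mathbf{x}\in\mathbb{R}^n$ with $B(\mathbf{x})\le 0$: either there is $0\le i\le N$ with $\mathcal{L}^j_{\mathbf{f}}B(\mathbf{x})=0$ for all $0\le j\le i-1$ and $\mathcal{L}^i_{\mathbf{f}}B(\mathbf{x})<0$, or $\mathcal{L}^i_{\mathbf{f}}B(\mathbf{x})=0$ for all $0\le i\le N$.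
   Context: The Lie derivatives of $B$ along $\mathbf{f}$ are $\mathcal{L}^0_{\mathbf{f}}B=B$ and $\mathcal{L}^k_{\mathbf{f}}B=\langle \nabla \mathcal{L}^{k-1}_{\mathbf{f}}B,\mathbf{f}\rangle$ for $k>0$. $N_{B,\mathbf{f}}\in\mathbb{N}^+$ denotes the completeness threshold: the minimal index $i$ such that $\mathcal{L}^{i+1}_{\mathbf{f}}B$ belongs to the polynomial ideal generated by $\mathcal{L}^0_{\mathbf{f}}B,\dots,\mathcal{L}^i_{\mathbf{f}}B$. An empty conjunction (the case $i=0$) is true. *)

(* Defs.v *)
From HB Require Import structures.
From mathcomp Require Import all_boot all_order all_algebra.
From mathcomp Require Import mpoly.
Set Implicit Arguments. Unset Strict Implicit. Unset Printing Implicit Defensive.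
Import Order.TTheory GRing.Theory Num.Theory.
Local Open Scope ring_scope.

Definition lie1 (R : realFieldType) (n : nat) (f : 'I_n -> {mpoly R[n]})
  (p : {mpoly R[n]}) : {mpoly R[n]} :=
  \sum_(k < n) mderiv k p * f k.

Definition lie (R : realFieldType) (n : nat) (f : 'I_n -> {mpoly R[n]})
  (B : {mpoly R[n]}) (k : nat) : {mpoly R[n]} :=
  iter k (lie1 f) B.

Definition in_lie_ideal (R : realFieldType) (n : nat) (f : 'I_n -> {mpoly R[n]})
  (B : {mpoly R[n]}) (i : nat) (q : {mpoly R[n]}) : Prop :=
  exists g : 'I_i.+1 -> {mpoly R[n]},
    q = \sum_(j < i.+1) g j * lie f B j.

Definition completeness_threshold (R : realFieldType) (n : nat)
  (f : 'I_n -> {mpoly R[n]}) (B : {mpoly R[n]}) (N : nat) : Prop :=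
  in_lie_ideal f B N (lie f B N.+1) /\
  (forall i : nat, (i < N)%N -> ~ in_lie_ideal f B i (lie f B i.+1)).

(* Main.v *)
Require Import Defs.
From HB Require Import structures.
From mathcomp Require Import all_boot all_order all_algebra.
From mathcomp Require Import mpoly.
Import Order.TTheory GRing.Theory Num.Theory.
Local Open Scope ring_scope.

Theorem lemma2 (R : realFieldType) (n : nat) (f : 'I_n -> {mpoly R[n]})
  (B : {mpoly R[n]}) (N : nat) :
  completeness_threshold f B N ->
  ((forall (x : 'I_n -> R) (i : nat), (1 <= i <= N)%N ->
      (forall j : nat, (j < i)%N -> (lie f B j).@[x] = 0) ->
      (lie f B i).@[x] <= 0)
   <->
   (forall x : 'I_n -> R, B.@[x] <= 0 ->
      (exists i : nat, (i <= N)%N /\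
         (forall j : nat, (j < i)%N -> (lie f B j).@[x] = 0) /\
         (lie f B i).@[x] < 0)
      \/ (forall i : nat, (i <= N)%N -> (lie f B i).@[x] = 0))).
Proof.
move=> _; split.
- move=> Ha x Bx.
  pose P := fun i => (i <= N)%N && ((lie f B i).@[x] != 0).
  have [ex|nex] := boolP [exists j : 'I_N.+1, P j].
  + have exP : exists i, P i by case/existsP: ex => j Pj; exists (nat_of_ord j).
    case: (ex_minnP exP) => m /andP[mN mnz] mmin.
    have low : forall j, (j < m)%N -> (lie f B j).@[x] = 0.
      move=> j jm; apply/eqP; apply/negPn/negP => jnz.
      have : (m <= j)%N by apply: mmin; rewrite /P jnz andbT; apply: leq_trans (ltnW jm) mN.
      by rewrite leqNgt jm.
    left; exists m; split => //; split => //.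
    case: m mN mnz mmin low => [|m] mN mnz _ low.
      by rewrite lt_neqAle mnz /=; exact Bx.
    by rewrite lt_neqAle mnz /=; apply: (Ha x m.+1) => //.
  + right => i iN; apply/eqP; apply/negPn/negP => inz.
    move/negP: nex; apply; apply/existsP; exists (Ordinal (iN : (i < N.+1)%N)).
    by rewrite /P /= iN inz.
- move=> Hb x i /andP[i1 iN] low.
  have B0 : B.@[x] = 0 by have := low 0%N i1.
  have Bx : B.@[x] <= 0 by rewrite B0.
  case: (Hb x Bx).
  + case=> k [kN [lowk neg]].
    have [ki|ik] := ltnP k i.
      by move: neg; rewrite (low k ki) ltxx.
    move: ik; rewrite leq_eqVlt => /orP[/eqP ->|ik]; first exact: ltW.
    by rewrite (lowk i ik).
  + by move=> all0; rewrite all0.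
Qed.
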